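(* Let $G$ be a finite simple graph, let $I$ be a maximum critical independent set in $G$, and let $X=I\cup N(I)$. Then $$|\operatorname{nucleus}(G)|+|\operatorname{diadem}(G)|\le |\operatorname{nucleus}(G[X])|+|\operatorname{diadem}(G[X])|.$$
   Context: For a graph $H$ and $Y\subseteq V(H)$, $N_H(Y)$ is the set of vertices of $H$ adjacent to some vertex of $Y$, and $d_H(Y)=|Y|-|N_H(Y)|$. An independent set $S$ of $H$ is critical in $H$ if $d_H(S)=\max\{d_H(Y):Y\subseteq V(H)\}$; the empty set may be critical. A maximum critical independent set is a critical independent set of maximum cardinality. $\operatorname{nucleus}(H)$ and $\operatorname{diadem}(H)$ are, respectively, the intersection and the union of all maximum critical independent sets of $H$; both are empty if the only critical independent set is $\emptyset$. $N(I)=N_G(I)$, and $G[X]$ is the subgraph of $G$ induced by $X$. *)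

(* Defs.v *)
From mathcomp Require Import all_boot all_order all_algebra.
Set Implicit Arguments. Unset Strict Implicit. Unset Printing Implicit Defensive.
Import GRing.Theory Num.Theory.
Local Open Scope ring_scope.

(* A finite simple graph on vertex type T is a symmetric irreflexive relation e.
   All notions below are taken in the induced subgraph H = G[V] for V : {set T};
   the whole graph G is V = [set: T]. *)
Definition simple_graph (T : finType) (e : rel T) : Prop :=
  irreflexive e /\ symmetric e.

Section Crit.
Variables (T : finType) (e : rel T) (V : {set T}).

Definition nbh (Y : {set T}) : {set T} :=
  [set v in V | [exists y in Y, (y \in V) && e y v]].

Definition dif (Y : {set T}) : int := (#|Y|%:Z - #|nbh Y|%:Z).

Definition indep (S : {set T}) : bool :=
  (S \subset V) && [forall x in S, forall y in S, ~~ e x y].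

Definition critical_indep (S : {set T}) : bool :=
  indep S && [forall Y : {set T}, (Y \subset V) ==> (dif Y <= dif S)].

Definition max_critical_indep (S : {set T}) : bool :=
  critical_indep S &&
  [forall S' : {set T}, critical_indep S' ==> (#|S'| <= #|S|)%N].

Definition nucleus : {set T} :=
  if [exists S, max_critical_indep S]
  then \bigcap_(S | max_critical_indep S) S else set0.

Definition diadem : {set T} := \bigcup_(S | max_critical_indep S) S.

End Crit.

(* Main.v *)
Require Import Defs.
From mathcomp Require Import all_boot all_order all_algebra.
From mathcomp Require Import zify.
Set Implicit Arguments. Unset Strict Implicit. Unset Printing Implicit Defensive.
Import Order.TTheory GRing.Theory Num.Theory.

Section G.
Variables (T : finType) (e : rel T).
Implicit Types V Y Z B S : {set T}.

Lemma nbhP V Y v : reflect (v \in V /\ exists2 y, y \in Y & (y \in V) && e y v) (v \in nbh e V Y).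
Proof. rewrite inE; apply: (iffP andP) => -[vV H]; split => //; exact/exists_inP. Qed.

Lemma nbhS V Y Z : Y \subset Z -> nbh e V Y \subset nbh e V Z.
Proof.
move=> /subsetP YZ; apply/subsetP => v /nbhP [vV [y yY H]]; apply/nbhP; split => //.
by exists y => //; apply: YZ.
Qed.

Lemma nbhU V Y Z : nbh e V (Y :|: Z) = nbh e V Y :|: nbh e V Z.
Proof.
apply/setP => v; rewrite in_setU; apply/idP/idP.
  by move=> /nbhP [vV [y]]; rewrite inE => /orP [yY|yZ] H; apply/orP; [left|right]; apply/nbhP; split => //; exists y.
case/orP => /nbhP [vV [y yY H]]; apply/nbhP; split => //; exists y => //; by rewrite inE yY ?orbT.
Qed.

Lemma nbh_sub V Y : nbh e V Y \subset V.
Proof. by apply/subsetP => v /nbhP []. Qed.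

Lemma dif_supermod V Y Z :
  (dif e V Y + dif e V Z <= dif e V (Y :|: Z) + dif e V (Y :&: Z))%R.
Proof.
rewrite /dif nbhU.
have h1 := cardsUI Y Z.
have h2 := cardsUI (nbh e V Y) (nbh e V Z).
have h3 : #|nbh e V (Y :&: Z)| <= #|nbh e V Y :&: nbh e V Z|.
  by apply: subset_leq_card; rewrite subsetI !nbhS // ?subsetIl ?subsetIr.
lia.
Qed.

Lemma ciP V S : critical_indep e V S ->
  [/\ S \subset V, (forall x y, x \in S -> y \in S -> ~~ e x y) &
      forall Y, Y \subset V -> (dif e V Y <= dif e V S)%R].
Proof.
case/andP => /andP [SV /forall_inP H] /forallP H2; split => //.
  by move=> x y xS yS; move: (H x xS) => /forall_inP; apply.
by move=> Y YV; move: (H2 Y) => /implyP; apply.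
Qed.

Lemma ciI V S : S \subset V -> (forall x y, x \in S -> y \in S -> ~~ e x y) ->
      (forall Y, Y \subset V -> (dif e V Y <= dif e V S)%R) -> critical_indep e V S.
Proof.
move=> SV H H2; apply/andP; split.
  apply/andP; split => //; apply/forall_inP => x xS; apply/forall_inP => y yS; exact: H.
by apply/forallP => Y; apply/implyP; apply: H2.
Qed.

Lemma mciP V S : max_critical_indep e V S ->
  critical_indep e V S /\ forall S', critical_indep e V S' -> #|S'| <= #|S|.
Proof.
case/andP => H /forallP H2; split => // S' hS'; move: (H2 S') => /implyP; apply => //.
Qed.

Lemma crit_union V S Y Z : critical_indep e V S -> Y \subset V -> Z \subset V ->
  (dif e V S <= dif e V Y)%R -> (dif e V S <= dif e V Z)%R -> (dif e V S <= dif e V (Y :|: Z))%R.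
Proof.
move=> /ciP [_ _ H] YV ZV h1 h2.
have h3 := H _ (subset_trans (subsetIl Y Z) YV).
have h4 := dif_supermod V Y Z.
lia.
Qed.

Hypothesis sg : simple_graph e.

Lemma difD V S B : S \subset V -> B \subset V ->
  (dif e V S - #|S :&: nbh e V B|%:Z + #|B :&: nbh e V S|%:Z <= dif e V (S :\: nbh e V B))%R.
Proof.
move=> SV BV.
have sub : nbh e V (S :\: nbh e V B) \subset nbh e V S :\: B.
  apply/subsetP => v vN; rewrite inE (subsetP (nbhS V (subsetDl S (nbh e V B)))) // andbT.
  move: vN => /nbhP [vV [y]]; rewrite inE => /andP [ynB yS] /andP [yV eyv].
  apply/negP => vB; move: ynB => /negP; apply; apply/nbhP; split => //; exists v => //.
  by rewrite vV /= (proj2 sg).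
have c1 := subset_leq_card sub.
have c2 := cardsID B (nbh e V S).
have c3 := cardsID (nbh e V B) S.
rewrite /dif.
rewrite cardsD in c1.
rewrite cardsD.
have c4 : #|nbh e V S :&: B| = #|B :&: nbh e V S| by rewrite setIC.
have c5 : #|S :&: nbh e V B| <= #|S| by apply: subset_leq_card; apply: subsetIl.
have c6 : #|nbh e V S :&: B| <= #|nbh e V S| by apply: subset_leq_card; apply: subsetIl.
lia.
Qed.

Lemma hall V S B : critical_indep e V S -> B \subset V ->
  #|B :&: nbh e V S| <= #|S :&: nbh e V B|.
Proof.
move=> hS BV; have [SV _ H] := ciP hS.
have h1 := difD SV BV.
have h2 := H _ (subset_trans (subsetDl S (nbh e V B)) SV).
lia.
Qed.

End G.

Section Main.
Variables (T : finType) (e : rel T) (I : {set T}).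
Hypothesis sg : simple_graph e.
Hypothesis hI : max_critical_indep e [set: T] I.
Implicit Types Y S : {set T}.
Local Notation N := (nbh e [set: T]).
Local Notation X := (I :|: N I).

Lemma NP (Y : {set T}) v : reflect (exists2 y, y \in Y & e y v) (v \in N Y).
Proof.
apply: (iffP (nbhP _ _ _ _)) => [[_ [y yY /andP [_ h]]]|[y yY h]]; first by exists y.
by split => //; exists y => //; rewrite inE.
Qed.

Lemma Iind x y : x \in I -> y \in I -> ~~ e x y.
Proof. by have [/ciP [_ H _] _] := mciP hI; apply: H. Qed.

Lemma L1 S : max_critical_indep e [set: T] S -> S \subset X.
Proof.
move=> hS; have [cS mS] := mciP hS; have [cI mI] := mciP hI.
have [_ Sind Scr] := ciP cS; have [_ Iind' Icr] := ciP cI.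
have eqd : dif e setT S = dif e setT I.
  by apply/eqP; rewrite eq_le Scr ?subsetT // Icr ?subsetT.
have h1 := difD sg (subsetT S) (subsetT I).
have h2 := hall sg cI (subsetT S).
set S' := S :\: N I.
have h3 : (dif e setT I <= dif e setT S')%R.
  move: h1 h2; rewrite eqd /S'; lia.
set J := I :|: S'.
have h4 : (dif e setT I <= dif e setT J)%R.
  by apply: crit_union => //; rewrite ?subsetT // lexx.
have cJ : critical_indep e setT J.
  apply: ciI; first exact: subsetT.
    move=> x y; rewrite !in_setU !in_setD => /orP [xI|/andP [xN xS]] /orP [yI|/andP [yN yS]].
    - exact: Iind'.
    - by apply/negP => exy; move: yN => /negP; apply; apply/NP; exists x.
    - apply/negP => exy; move: xN => /negP; apply; apply/NP; exists y => //.
      by rewrite (proj2 sg).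
    - exact: Sind.
  by move=> Y _; apply: le_trans h4; apply: Icr; apply: subsetT.
have cardJ := mI J cJ.
have S'I : S' \subset I.
  apply/subsetP => x xS'; apply/negPn/negP => xI.
  have : I \proper J.
    apply/properP; split; first exact: subsetUl.
    by exists x => //; rewrite inE xS' orbT.
  by move/proper_card; rewrite ltnNge cardJ.
apply/subsetP => x xS; rewrite inE; case: (boolP (x \in N I)) => xN; first by rewrite orbT.
by rewrite (subsetP S'I) // inE xN xS.
Qed.

Lemma L2 : #|nucleus e setT| + #|diadem e setT| <= #|I| + #|I|.
Proof.
have [cI mI] := mciP hI.
set D := diadem e setT.
set U := D :\: I.
have ID : I \subset D by apply: bigcup_sup.
have nucE : nucleus e setT = \bigcap_(S | max_critical_indep e setT S) S.
  by rewrite /nucleus; case: ifP => // /negbT /existsPn /(_ I); rewrite hI.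
have sub : nucleus e setT \subset I :\: N U.
  apply/subsetP => x; rewrite nucE => /bigcapP xS.
  rewrite in_setD (xS I hI) andbT; apply/negP => /NP [y]; rewrite in_setD => /andP [yI].
  move=> /bigcupP [S hS yS] eyx.
  have [/ciP [_ Sind _] _] := mciP hS.
  by move: (Sind y x yS (xS S hS)); rewrite eyx.
have UN : U \subset N I.
  apply/subsetP => y; rewrite in_setD => /andP [yI] /bigcupP [S hS yS].
  by move: (subsetP (L1 hS) y yS); rewrite in_setU (negbTE yI).
have h1 := hall sg cI (subsetT U).
have h2 : U :&: N I = U by apply/setIidPl.
rewrite h2 in h1.
have h3 := subset_leq_card sub.
rewrite cardsD in h3.
have h4 := cardsID I D.
have h5 : D :&: I = I by apply/setIidPr.
rewrite h5 in h4.
have h6 : #|I :&: N U| <= #|I| by apply: subset_leq_card; apply: subsetIl.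
change (#|I| + #|U| = #|D|) in h4; lia.
Qed.

Lemma NI_X : N I \subset X.
Proof. exact: subsetUr. Qed.

Lemma R0 : nbh e X I = N I.
Proof.
apply/setP => v; apply/idP/idP.
  by move=> /nbhP [_ [y yI /andP [_ h]]]; apply/NP; exists y.
move=> vN; apply/nbhP; split; first by rewrite in_setU vN orbT.
by move: vN => /NP [y yI h]; exists y => //; rewrite in_setU yI.
Qed.

Lemma XD Y : Y \subset X -> Y :\: I \subset N I.
Proof.
move=> /subsetP YX; apply/subsetP => y; rewrite in_setD => /andP [yI yY].
by move: (YX y yY); rewrite in_setU (negbTE yI).
Qed.

Lemma K Y : Y \subset X ->
  (dif e X Y <= dif e setT I + #|Y :\: I|%:Z - #|I :&: N (Y :\: I)|%:Z)%R.
Proof.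
move=> YX.
have [cI _] := mciP hI; have [_ _ Icr] := ciP cI.
have hA := Icr (Y :&: I) (subsetT _).
have sub : N (Y :&: I) :|: (I :&: N (Y :\: I)) \subset nbh e X Y.
  apply/subsetP => v; rewrite in_setU in_setI => /orP [/NP [y yA h]|/andP [vI /NP [y yB h]]].
    apply/nbhP; split.
      by apply: (subsetP NI_X); apply/NP; exists y => //; move: yA; rewrite in_setI => /andP [].
    exists y; first by move: yA; rewrite in_setI => /andP [].
    by rewrite h (subsetP YX) //; move: yA; rewrite in_setI => /andP [].
  apply/nbhP; split; first by rewrite in_setU vI.
  have yY : y \in Y by move: yB; rewrite in_setD => /andP [].
  by exists y => //; rewrite h (subsetP YX).
have disj : N (Y :&: I) :&: (I :&: N (Y :\: I)) = set0.
  apply/setP => v; rewrite !in_setI in_set0; apply/negP => /andP [/NP [y yA h] /andP [vI _]].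
  by move: (Iind (subsetP (subsetIr Y I) y yA) vI); rewrite h.
have c1 := subset_leq_card sub.
have c2 := cardsUI (N (Y :&: I)) (I :&: N (Y :\: I)).
rewrite disj cards0 in c2.
have c3 := cardsID I Y.
move: hA; rewrite /dif; lia.
Qed.

Lemma difXI : dif e X I = dif e setT I.
Proof. by rewrite /dif R0. Qed.

Lemma R1 : critical_indep e X I.
Proof.
have [cI _] := mciP hI.
apply: ciI; [exact: subsetUl | by move=> x y; apply: Iind |].
move=> Y YX; rewrite difXI.
have h1 := K YX.
have h2 := hall sg cI (subsetT (Y :\: I)).
have h3 : (Y :\: I) :&: N I = Y :\: I by apply/setIidPl; apply: XD.
rewrite h3 in h2; lia.
Qed.

Lemma R2 S : critical_indep e X S ->
  #|S| <= #|I| /\ (#|I| <= #|S| -> I \subset S :|: N (S :\: I)).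
Proof.
move=> cS; have [SX Sind Scr] := ciP cS.
have [cI _] := mciP hI.
have h1 := Scr I (subsetUl _ _); rewrite difXI in h1.
have h2 := K SX.
have h3 := hall sg cI (subsetT (S :\: I)).
have h4 : (S :\: I) :&: N I = S :\: I by apply/setIidPl; apply: XD.
rewrite h4 in h3.
have disj : (S :&: I) :&: (I :&: N (S :\: I)) = set0.
  apply/setP => v; rewrite !in_setI in_set0; apply/negP => /andP [/andP [vS _] /andP [_ /NP [y yB h]]].
  by move: (Sind y v (subsetP (subsetDl S I) y yB) vS); rewrite h.
have c2 := cardsUI (S :&: I) (I :&: N (S :\: I)).
rewrite disj cards0 in c2.
have c3 := cardsID I S.
have AWI : (S :&: I) :|: (I :&: N (S :\: I)) \subset I by rewrite subUset subsetIr subsetIl.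
have c4 := subset_leq_card AWI.
split; first lia.
move=> hle; apply/subsetP => x xI.
have : x \in (S :&: I) :|: (I :&: N (S :\: I)).
  apply/negPn/negP => xn.
  have : (S :&: I) :|: (I :&: N (S :\: I)) \proper I by apply/properP; split => //; exists x.
  move/proper_card; lia.
rewrite !in_setU !in_setI => /orP [/andP [-> _]|/andP [_ ->]] //; by rewrite orbT.
Qed.

Lemma R3 : max_critical_indep e X I.
Proof.
apply/andP; split; first exact: R1.
by apply/forallP => S; apply/implyP => /R2 [].
Qed.

Lemma R5 : diadem e X \subset X /\ (dif e setT I <= dif e X (diadem e X))%R.
Proof.
have ID : I \subset diadem e X by apply: bigcup_sup; exact: R3.
have -> : diadem e X = I :|: diadem e X by apply/esym/setUidPr.
rewrite subUset subsetUl /=.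
rewrite /diadem; elim/big_rec: _ => [|S A hS [AX hA]].
  by rewrite sub0set setU0 difXI.
split.
  by have [cS _] := mciP hS; have [SX _ _] := ciP cS; rewrite subUset AX SX.
have [cS _] := mciP hS; have [SX _ Scr] := ciP cS.
rewrite setUCA; rewrite -difXI.
apply: crit_union; first exact: R1.
- exact: SX.
- by rewrite subUset subsetUl AX.
- exact: Scr (subsetUl _ _).
- by rewrite difXI.
Qed.
End Main.

Theorem lemma2p4 (T : finType) (e : rel T) (I : {set T}) :
  simple_graph e ->
  max_critical_indep e [set: T] I ->
  let X := I :|: nbh e [set: T] I in
  (#|nucleus e [set: T]| + #|diadem e [set: T]| <=
   #|nucleus e X| + #|diadem e X|)%N.
Proof.
move=> sg hI; cbv zeta.
have hL := L2 sg hI.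
set X := I :|: nbh e [set: T] I.
set D := diadem e X.
set U := D :\: I.
have ID : I \subset D by apply: bigcup_sup; exact: R3.
have nucE : nucleus e X = \bigcap_(S | max_critical_indep e X S) S.
  by rewrite /nucleus; case: ifP => // /negbT /existsPn /(_ I); rewrite R3.
have sub : I :\: nbh e setT U \subset nucleus e X.
  apply/subsetP => x; rewrite in_setD => /andP [xN xI]; rewrite nucE; apply/bigcapP => S hS.
  have [cS mS] := mciP hS.
  have [_ /(_ (mS I (R1 sg hI)))] := R2 sg hI cS.
  move=> /subsetP /(_ x xI); rewrite in_setU => /orP [] // xNS.
  move: xN => /negP; case; apply: (subsetP (@nbhS _ e setT (S :\: I) U _)) xNS.
  apply/subsetP => y; rewrite !in_setD => /andP [-> yS] /=.
  by apply/bigcupP; exists S.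
have [DX hD] := R5 sg hI.
have hK := K hI DX.
have c1 := subset_leq_card sub.
rewrite cardsD in c1.
have c4 := cardsID I D.
have h5 : D :&: I = I by apply/setIidPr.
rewrite h5 in c4.
change (#|I| + #|U| = #|D|) in c4.
have h6 : #|I :&: nbh e setT U| <= #|I| by apply: subset_leq_card; apply: subsetIl.
move: hK; rewrite -/U; lia.
Qed.
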